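(* Let $\phi:X\to Y$ be a pure morphism of $\mathrm{Agg}^{\rm ctd}$, i.e. a composite of virtual edge and virtual loop contractions. Then $X$ may be identified with the total dissection $\mathrm{agg}(\mathbb{\Gamma}(\phi))$, $Y$ with the total contraction $\mathbb{\Gamma}(\phi)/\mathbb{\Gamma}(\phi)$, and $\phi$ with $\mathrm v_{\mathbb{\Gamma}(\phi)}=c_{\mathbb{\Gamma}(\phi)}\circ i_{\mathbb{\Gamma}(\phi)}$. Consequently any pure morphism of $\mathrm{Agg}^{\rm ctd}$ is uniquely determined by its ghost graph.
   Context: A graph $\Gamma=(F,V,\partial,\imath)$ consists of finite sets $F$ (flags) and $V$ (vertices), a map $\partial:F\to V$ and an involution $\imath$ of $F$. The two-element orbits of $\imath$ are the edges, the fixed points the outer flags. A graph morphism $\phi:\Gamma\to\Gamma'=(F',V',\partial',\imath')$ is a triple $(\phi_V,\phi^F,\imath_\phi)$ with $\phi_V:V\to V'$ surjective, $\phi^F:F'\to F$ injective and $\imath_\phi$ a fixed-point-free involution of $F\setminus\phi^F(F')$, such that: (i) $\phi_V\partial\phi^F=\partial'$ and $\phi_V\partial(f)=\phi_V\partial(\imath_\phi f)$ for $f\notin\phi^F(F')$; (ii) for $f\notin\phi^F(F')$, either $\{f,\imath f\}$ is an edge of $\Gamma$ and $\imath_\phi f=\imath f$, or $f$ and $\imath_\phi f$ are both outer flags of $\Gamma$; (iii) if $f'\in F'$ and $\phi^F(f')$ lies on an edge of $\Gamma$, then $\imath(\phi^F f')=\phi^F(\imath' f')$. Composition: $(\psi\phi)_V=\psi_V\phi_V$,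 $(\psi\phi)^F=\phi^F\psi^F$, $\imath_{\psi\phi}$ equals $\imath_\phi$ off $\phi^F(F')$ and $\phi^F\imath_\psi(\phi^F)^{-1}$ on $\phi^F(F'\setminus\psi^F(F''))$. The ghost graph of $\phi$ is $\mathbb{\Gamma}(\phi)=(F,V,\partial,\hat\imath_\phi)$, $\hat\imath_\phi$ extending $\imath_\phi$ by the identity on $\phi^F(F')$. A corolla $*_S$ has one vertex, flag set $S$, no edges; an aggregate is a graph with $\imath=\mathrm{id}$. The simple grafting of distinct outer flags $s,t$ is $(\mathrm{id},\mathrm{id},\emptyset)$ into the graph whose involution additionally exchanges $s,t$; the simple contraction $c_{\{s,t\}}$ of an edge is (quotient $V\to V/(\partial s\sim\partial t)$, inclusion $F\setminus\{s,t\}\hookrightarrow F$, $\imath_\phi(s)=t$). For distinct outer flags $s,t$ of an aggregate, the virtual edge contraction ${}_s\circ_t$ ($\partial s\ne\partial t$) resp. virtual loop contraction $\circ_{st}$ ($\partial s=\partial t$) is $c_{\{s,t\}}$ composed after the grafting of $s,t$. $\mathrm{Agg}^{\rm ctd}$ is the category of aggregates with morphisms generated by isomorphisms and virtual edge/loop contractions. For a graph $\Gamma$: the total dissection is $\mathrm{agg}(\Gamma)=(F,V,\partial,\mathrm{id})$; the total contraction $\Gamma/\Gamma$ is the aggregate whose vertices are the connected components of $\Gamma$ and whose flags are the outer flags of $\Gamma$, each attached to its component; $i_\Gamma:\mathrm{agg}(\Gamma)\to\Gamma$ is the composite of graftings of all edges, $c_\Gamma:\Gamma\to\Gamma/\Gamma$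 the composite of contractions of all edges, and $\mathrm v_\Gamma=c_\Gamma i_\Gamma$. *)

(* Defs.v *)
(* Graphs in the sense of Borisov--Manin / Kaufmann--Ward:
   flags F, vertices V, incidence map, involution on flags. *)
From mathcomp Require Import all_boot.

Record graph := Graph {
  gF : finType;
  gV : finType;
  gd : gF -> gV;
  gi : gF -> gF
}.

Arguments Graph {gF gV} gd gi.
Set Implicit Arguments. Unset Strict Implicit. Unset Printing Implicit Defensive.

Definition is_graph (G : graph) : Prop := forall f, gi G (gi G f) = f.

Definition is_aggregate (G : graph) : Prop := is_graph G /\ forall f, gi G f = f.

(* We store the
   involution imath_phi through its extension \hat\imath_phi by the identity on
   the image of phi^F (this is a bijective encoding of the partial involution). *)
Record morph (X Y : graph) := Morph {
  mV : gV X -> gV Y;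
  mF : gF Y -> gF X;
  mi : gF X -> gF X
}.

Arguments Morph {X Y}.
Arguments mV {X Y}.
Arguments mF {X Y}.
Arguments mi {X Y}.

Definition inim X Y (p : morph X Y) (f : gF X) : bool := [exists f', mF p f' == f].

Definition is_morph X Y (p : morph X Y) : Prop :=
  [/\ (forall y, exists x, mV p x = y),
      injective (mF p),
      (forall f, mi p (mi p f) = f),
      (forall f, inim p f -> mi p f = f) &
      [/\ (forall f, ~~ inim p f -> mi p f != f),
          (forall f', mV p (gd X (mF p f')) = gd Y f'),
          (forall f, ~~ inim p f -> mV p (gd X f) = mV p (gd X (mi p f))),
          (forall f, ~~ inim p f ->
              (gi X f != f /\ mi p f = gi X f) \/ (gi X f = f /\ gi X (mi p f) = mi p f)) &
          (forall f', gi X (mF p f') != mF p f' ->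
              gi X (mF p f') = mF p (gi Y f'))]].

Definition is_iso X Y (p : morph X Y) : Prop :=
  [/\ is_morph p, bijective (mV p) & bijective (mF p)].

Definition mid (X : graph) : morph X X := Morph (fun v => v) (fun f => f) (fun f => f).

Definition mcomp X Y Z (q : morph Y Z) (p : morph X Y) : morph X Z :=
  Morph (fun v => mV q (mV p v)) (fun f => mF p (mF q f))
        (fun f => match [pick f' | mF p f' == f] with
                  | Some f' => mF p (mi q f')
                  | None => mi p f
                  end).

Definition ghost X Y (p : morph X Y) : graph := Graph (gd X) (mi p).

Definition agg (G : graph) : graph := Graph (gd G) (fun f => f).

Definition swap (T : eqType) (s t : T) (f : T) : T :=
  if f == s then t else if f == t then s else f.

Definition graft (G : graph) (s t : gF G) : graph :=
  Graph (gd G) (fun f => if (f == s) || (f == t) then swap s t f else gi G f).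

Definition graft_m (G : graph) (s t : gF G) : morph G (graft s t) :=
  @Morph G (graft s t) (fun v : gV G => v) (fun f : gF G => f) (fun f : gF G => f).

Definition cF (G : graph) (s t : gF G) := {f : gF G | (f != s) && (f != t)}.
(* V / (d s ~ d t), represented by the vertices other than d t (unless d s = d t) *)
Definition cV (G : graph) (s t : gF G) := {v : gV G | (v != gd G t) || (gd G s == gd G t)}.

Lemma cV_ds (G : graph) (s t : gF G) : (gd G s != gd G t) || (gd G s == gd G t).
Proof. by case: eqP. Qed.

Definition cproj (G : graph) (s t : gF G) (v : gV G) : cV s t :=
  insubd (exist _ (gd G s) (cV_ds s t) : cV s t)
         (if v == gd G t then gd G s else v).

Definition contract (G : graph) (s t : gF G) : graph :=
  @Graph (cF s t : finType) (cV s t : finType)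
    (fun f => cproj s t (gd G (val f)))
    (fun f => insubd f (gi G (val f))).

Definition contr_m (G : graph) (s t : gF G) : morph G (contract s t) :=
  @Morph G (contract s t) (cproj s t) (fun f => val f) (swap s t).

Definition vcontr (X : graph) (s t : gF X) : morph X (@contract (graft s t) s t) :=
  mcomp (@contr_m (graft s t) s t) (graft_m s t).

Inductive pure : forall X Y : graph, morph X Y -> Prop :=
| pure_id X : is_aggregate X -> pure (mid X)
| pure_step X Y (p : morph X Y) (s t : gF Y) :
    pure p -> is_aggregate Y -> s != t -> pure (mcomp (vcontr s t) p).

Definition adj (G : graph) : rel (gV G) :=
  fun v w => [exists f, [&& gd G f == v, gd G (gi G f) == w & gi G f != f]].

Definition compset (G : graph) (v : gV G) : {set gV G} := [set w | connect (@adj G) v w].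

Definition comp (G : graph) := {C : {set gV G} | [exists v, C == compset v]}.

Lemma compset_comp (G : graph) (v : gV G) : [exists w, compset v == compset w].
Proof. by apply/existsP; exists v. Qed.

Definition compof (G : graph) (v : gV G) : comp G := exist _ (compset v) (compset_comp v).

Definition outer (G : graph) := {f : gF G | gi G f == f}.

Definition tquot (G : graph) : graph :=
  @Graph (outer G : finType) (comp G : finType)
    (fun f => compof (gd G (val f))) (fun f => f).

(* i_G : agg(G) -> G, composite of graftings of all edges *)
Definition i_m (G : graph) : morph (agg G) G :=
  @Morph (agg G) G (fun v : gV G => v) (fun f : gF G => f) (fun f : gF G => f).

(* c_G : G -> G/G, composite of contractions of all edges *)
Definition c_m (G : graph) : morph G (tquot G) :=
  @Morph G (tquot G) (@compof G) (fun f => val f) (gi G).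

Definition v_m (G : graph) : morph (agg G) (tquot G) := mcomp (c_m G) (i_m G).

(* phi (with source X) coincides with sigma \circ v_{ghost phi}, whose source is
   agg(ghost phi) (which has the same flags and vertices as X). *)
Definition agrees_with_v X Y (p : morph X Y) (sigma : morph (tquot (ghost p)) Y) : Prop :=
  let chi := mcomp sigma (v_m (ghost p)) in
  [/\ forall v : gV X, mV p v = mV chi v,
      forall f : gF Y, mF p f = mF chi f &
      forall f : gF X, mi p f = mi chi f].

Definition morph_eq X Y (p q : morph X Y) : Prop :=
  [/\ forall v, mV p v = mV q v, forall f, mF p f = mF q f & forall f, mi p f = mi q f].

(* Main.v *)
Require Import Defs.
From mathcomp Require Import all_boot.
Set Implicit Arguments. Unset Strict Implicit. Unset Printing Implicit Defensive.

Record Inv X Y (p : morph X Y) : Prop := {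
  iaX : forall f, gi X f = f;
  iaY : forall f, gi Y f = f;
  iinv : forall f, mi p (mi p f) = f;
  ifix : forall f, mi p f = f <-> exists f', mF p f' = f;
  iinj : injective (mF p);
  isurj : forall y, exists x, mV p x = y;
  i6 : forall f', mV p (gd X (mF p f')) = gd Y f';
  i7 : forall f, mV p (gd X f) = mV p (gd X (mi p f));
  i8 : forall v w, mV p v = mV p w -> connect (@adj (ghost p)) v w }.

Lemma inv_id X : is_aggregate X -> Inv (mid X).
Proof.
case=> _ HX; split=> //=.
- by move=> f; split=> // _; exists f.
- by move=> y; exists y.
- by move=> v w ->; exact: connect0.
Qed.

Lemma swapK (T : eqType) (s t : T) : involutive (swap s t).
Proof.
move=> f; rewrite /swap; case: (f =P s) => [->|Hs]; first by rewrite eqxx; case: eqP.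
case: (f =P t) => [->|Ht]; first by rewrite eqxx.
by case: eqP => [E|_]; [case: Hs| case: eqP => [E|//]; case: Ht].
Qed.

Lemma val_cproj (G : graph) (s t : gF G) v :
  val (cproj s t v) = if v == gd G t then gd G s else v.
Proof.
rewrite /cproj val_insubd; case: (v =P gd G t) => Hv /=.
  by case: ifP.
by rewrite (introN eqP Hv).
Qed.

Lemma swap_fix (T : eqType) (s t g : T) : s != t ->
  (swap s t g = g) <-> ((g != s) && (g != t)).
Proof.
move=> st; rewrite /swap; case: (g =P s) => [->|Hs] /=.
  by split=> // E; move: st; rewrite E eqxx.
case: (g =P t) => [->|Ht] /=; last by [].
by split=> // E; move: st; rewrite E eqxx.
Qed.

Section Step.
Variables (X Y : graph) (p : morph X Y) (s t : gF Y).
Hypotheses (H : Inv p) (HY : is_aggregate Y) (st : s != t).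
Let r := mcomp (vcontr s t) p.

Lemma r_img g : mi r (mF p g) = mF p (swap s t g).
Proof.
rewrite /r /=; case: pickP => [g' /eqP E | N]; last by have := N g; rewrite eqxx.
have -> := iinj H E; congr (mF p _).
by case: pickP => [g'' /eqP -> | N] //; have := N g; rewrite eqxx.
Qed.

Lemma r_nimg f : (forall g, mF p g != f) -> mi r f = mi p f.
Proof.
move=> N; rewrite /r /=; case: pickP => [g' E | _] //.
by have := N g'; rewrite E.
Qed.


Lemma nimg_mi f : (forall g, mF p g != f) -> forall g, mF p g != mi p f.
Proof.
move=> N g; apply/eqP=> E.
have Fg : mi p (mF p g) = mF p g by apply/(ifix H); exists g.
have : mF p g = f by rewrite -{1}Fg E (iinv H).
by move/eqP; rewrite (negbTE (N g)).
Qed.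

Lemma adj_sub a b : @adj (ghost p) a b -> @adj (ghost r) a b.
Proof.
case/existsP=> f /and3P [E1 E2 E3]; apply/existsP; exists f.
have N : forall g, mF p g != f.
  move=> g; apply/eqP=> E; move: E3; rewrite /=.
  have -> : mi p f = f by apply/(ifix H); exists g.
  by rewrite eqxx.
change [&& gd X f == a, gd X (mi r f) == b & mi r f != f].
by rewrite r_nimg // E1 E2 E3.
Qed.

Lemma con_sub a b : connect (@adj (ghost p)) a b -> connect (@adj (ghost r)) a b.
Proof.
apply: connect_sub => x y /adj_sub ?; exact: connect1.
Qed.

Lemma bridge : @adj (ghost r) (gd X (mF p t)) (gd X (mF p s)).
Proof.
apply/existsP; exists (mF p t).
change [&& gd X (mF p t) == gd X (mF p t), gd X (mi r (mF p t)) == gd X (mF p s) & mi r (mF p t) != mF p t].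
rewrite r_img.
have -> : swap s t t = s by rewrite /swap eqxx; case: eqP => // ->.
rewrite !eqxx /=; by apply/eqP=> /(iinj H) E; move: st; rewrite E eqxx.
Qed.

Lemma bridge' : @adj (ghost r) (gd X (mF p s)) (gd X (mF p t)).
Proof.
apply/existsP; exists (mF p s).
change [&& gd X (mF p s) == gd X (mF p s), gd X (mi r (mF p s)) == gd X (mF p t) & mi r (mF p s) != mF p s].
rewrite r_img.
have -> : swap s t s = t by rewrite /swap eqxx.
rewrite !eqxx /=; by apply/eqP=> /(iinj H) E; move: st; rewrite E eqxx.
Qed.

Lemma inv_step : Inv r.
Proof.
split.
- exact: iaX H.
- move=> [g Hg] /=; apply: val_inj; rewrite val_insubd /=.
  case/andP: (Hg) => /negbTE -> /negbTE -> /=; rewrite (iaY H) /=.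
  by rewrite Hg.
- move=> f; case: (pickP (fun g => mF p g == f)) => [g /eqP <- | N].
    by rewrite !r_img swapK.
  have N' : forall g, mF p g != f by move=> g; rewrite N.
  by rewrite r_nimg // r_nimg ?(iinv H) //; apply: nimg_mi.
- move=> f; case: (pickP (fun g => mF p g == f)) => [g /eqP <- | N].
    rewrite r_img; split.
      move/(iinj H)/(swap_fix _ st) => Hg; by exists (exist _ g Hg).
    case=> [[h Hh] E]; have /(iinj H) E' : mF p h = mF p g := E; subst h.
    by congr (mF p _); apply/(swap_fix _ st).
  have N' : forall g, mF p g != f by move=> g; rewrite N.
  rewrite r_nimg //; split.
    move/(ifix H) => [g E]; by have := N' g; rewrite E eqxx.
  by case=> h E; have := N' (val h); rewrite [mF p _]E eqxx.
- by move=> h1 h2 /(iinj H) /val_inj.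
- move=> z; have [x Ex] := isurj H (val z); exists x; apply: val_inj.
  change (val (@cproj (graft s t) s t (mV p x)) = val z).
  rewrite val_cproj Ex /=; case: eqP => // E.
  by have := valP z; rewrite /= E eqxx /= => /eqP.
- by move=> h; rewrite /= (i6 H).
- move=> f; case: (pickP (fun g => mF p g == f)) => [g /eqP <- | N].
    rewrite r_img.
    change (@cproj (graft s t) s t (mV p (gd X (mF p g))) = @cproj (graft s t) s t (mV p (gd X (mF p (swap s t g))))).
    rewrite !(i6 H); apply: val_inj; rewrite !val_cproj /=.
    rewrite /swap; case: (g =P s) => [->|Hs]; first by rewrite eqxx; case: ifP.
    by case: (g =P t) => [->|Ht]; [rewrite eqxx; case: ifP | ].
  have N' : forall g, mF p g != f by move=> g; rewrite N.
  by rewrite r_nimg //= (i7 H).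
- move=> v w E0.
  have := congr1 val (E0 : @cproj (graft s t) s t (mV p v) = @cproj (graft s t) s t (mV p w)).
  rewrite !val_cproj /=.
  case: (mV p v =P gd Y t) => Ev; case: (mV p w =P gd Y t) => Ew E.
  + by apply: con_sub; apply: (i8 H); rewrite Ev Ew.
  + apply: (connect_trans (y := gd X (mF p t))).
      by apply: con_sub; apply: (i8 H); rewrite Ev (i6 H).
    apply: (connect_trans (connect1 bridge)).
    by apply: con_sub; apply: (i8 H); rewrite (i6 H).
  + apply: (connect_trans (y := gd X (mF p s))).
      by apply: con_sub; apply: (i8 H); rewrite (i6 H).
    apply: (connect_trans (connect1 bridge')).
    by apply: con_sub; apply: (i8 H); rewrite Ew (i6 H).
  + by apply: con_sub; apply: (i8 H).
Qed.

End Step.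

Lemma pure_inv X Y (p : morph X Y) : pure p -> Inv p.
Proof.
elim=> {X Y p} [X HX | X Y p s t _ IH HY st]; first exact: inv_id.
exact: inv_step.
Qed.

From Stdlib Require Import FunctionalExtensionality.

Section Main.
Variables (X Y : graph) (p : morph X Y).
Hypothesis H : Inv p.

Lemma conn_eq v w : connect (@adj (ghost p)) v w = (mV p v == mV p w).
Proof.
apply/idP/eqP; last exact: (i8 H).
case/connectP=> s pth ->{w}; elim: s v pth => //= x s IH v /andP [a pth].
rewrite -(IH x pth); case/existsP: a => f /and3P [/eqP E1 /eqP E2 _].
by rewrite -E1 -E2 (i7 H).
Qed.

Lemma fixF y : gi (ghost p) (mF p y) == mF p y.
Proof. by apply/eqP/(ifix H); exists y. Qed.

Definition sV (C : Defs.comp (ghost p)) : gV Y := mV p (xchoose (existsP (valP C))).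
Definition sF (y : gF Y) : outer (ghost p) := exist _ (mF p y) (fixF y).
Definition sigma : morph (tquot (ghost p)) Y :=
  @Morph (tquot (ghost p)) Y sV sF (fun f => f).

Lemma sV_compof v : sV (@compof (ghost p) v) = mV p v.
Proof.
rewrite /sV; set v0 := xchoose _.
have := xchooseP (existsP (valP (compof v))); rewrite -/v0 /= => /eqP E.
have : v0 \in compset v by rewrite E inE connect0.
by rewrite inE conn_eq => /eqP.
Qed.

Lemma comp_ex (C : Defs.comp (ghost p)) : exists v, C = compof v.
Proof.
have [v /eqP E] := existsP (valP C); exists v; apply: val_inj; exact: E.
Qed.

Lemma compof_eq v w : mV p v = mV p w -> @compof (ghost p) v = @compof (ghost p) w.
Proof.
move=> E; apply: val_inj; change (@compset (ghost p) v = @compset (ghost p) w); apply/setP=> z; rewrite !inE !conn_eq E //.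
Qed.

Lemma surjp y : exists x, mV p x == y.
Proof. by have [x E] := isurj H y; exists x; rewrite E. Qed.

Lemma preF (o : outer (ghost p)) : exists f, mF p f == val o.
Proof.
have /(ifix H) [f E] : mi p (val o) = val o by exact/eqP/(valP o).
by exists f; rewrite E.
Qed.

Lemma sigma_iso : is_iso sigma.
Proof.
have bV : bijective sV.
  exists (fun y => @compof (ghost p) (xchoose (surjp y))).
    move=> C; have [v ->] := comp_ex C; rewrite sV_compof; apply: compof_eq.
    exact/eqP/(xchooseP (surjp _)).
  by move=> y; rewrite sV_compof; exact/eqP/(xchooseP (surjp _)).
have bF : bijective sF.
  exists (fun o => xchoose (preF o)).
    move=> y; apply: (iinj H); exact/eqP/(xchooseP (preF (sF y))).
  by move=> o; apply: val_inj; exact/eqP/(xchooseP (preF o)).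
have allin : forall f, inim sigma f.
  by move=> f; apply/existsP; case: bF => g _ K; exists (g f); rewrite /= K.
split=> //; split.
- by move=> y; case: bV => g _ K; exists (g y); rewrite /= K.
- exact: bij_inj.
- by [].
- by [].
- split.
  + by move=> f; rewrite allin.
  + by move=> f'; rewrite /= sV_compof (i6 H).
  + by move=> f; rewrite allin.
  + by move=> f; rewrite allin.
  + by move=> f'; rewrite /= eqxx.
Qed.

Lemma sigma_agrees : agrees_with_v sigma.
Proof.
split.
- by move=> v; rewrite /= sV_compof.
- by [].
- move=> f /=; case: pickP => [o /eqP <- | N] /=; first exact/eqP/(valP o).
  case: pickP => [g /eqP -> | N'] //; by have := N' f; rewrite eqxx.
Qed.

End Main.

Lemma agg_ghost X Y (p : morph X Y) : Inv p -> agg (ghost p) = X.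
Proof.
move=> H; move: (iaX H); case: X p H => F V d i p _ /= Hi.
by rewrite /agg /=; congr Graph; apply: functional_extensionality => f; rewrite Hi.
Qed.

Section Uniq.
Variables (X Y Y' : graph) (p : morph X Y) (q : morph X Y').
Hypotheses (H : Inv p) (Hq : Inv q) (Hmi : forall f, mi q f = mi p f).

Lemma fib v w : (mV q v == mV q w) = (mV p v == mV p w).
Proof.
rewrite -(conn_eq Hq) -(conn_eq H); apply: eq_connect => a b.
by rewrite /adj; apply: eq_existsb => f /=; rewrite Hmi.
Qed.

Lemma Fpq f' : exists f, mF p f == mF q f'.
Proof.
have /(ifix H) [f E] : mi p (mF q f') = mF q f' by rewrite -Hmi; apply/(ifix Hq); exists f'.
by exists f; rewrite E.
Qed.

Lemma Fqp f : exists f', mF q f' == mF p f.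
Proof.
have /(ifix Hq) [f' E] : mi q (mF p f) = mF p f by rewrite Hmi; apply/(ifix H); exists f.
by exists f'; rewrite E.
Qed.

Definition tV y := mV q (xchoose (surjp H y)).
Definition tF f' := xchoose (Fpq f').
Definition uV y' := mV p (xchoose (surjp Hq y')).
Definition uF f := xchoose (Fqp f).
Definition tau : morph Y Y' := Morph tV tF (fun f => f).

Lemma tV_p x : tV (mV p x) = mV q x.
Proof. apply/eqP; rewrite fib; exact: (xchooseP (surjp H _)). Qed.
Lemma uV_q x : uV (mV q x) = mV p x.
Proof. apply/eqP; rewrite -fib; exact: (xchooseP (surjp Hq _)). Qed.
Lemma tF_spec f' : mF p (tF f') = mF q f'.
Proof. exact/eqP/(xchooseP (Fpq f')). Qed.
Lemma uF_spec f : mF q (uF f) = mF p f.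
Proof. exact/eqP/(xchooseP (Fqp f)). Qed.

Lemma tVK : cancel tV uV.
Proof. by move=> y; have [x <-] := isurj H y; rewrite tV_p uV_q. Qed.
Lemma uVK : cancel uV tV.
Proof. by move=> y; have [x <-] := isurj Hq y; rewrite uV_q tV_p. Qed.
Lemma tFK : cancel tF uF.
Proof. by move=> f'; apply: (iinj Hq); rewrite uF_spec tF_spec. Qed.
Lemma uFK : cancel uF tF.
Proof. by move=> f; apply: (iinj H); rewrite tF_spec uF_spec. Qed.

Lemma tau_iso : is_iso tau.
Proof.
have allin : forall f, inim tau f.
  by move=> f; apply/existsP; exists (uF f); rewrite /= uFK.
split; last by exists uF; [exact: tFK | exact: uFK].
  split.
  - by move=> y; exists (uV y); rewrite /= uVK.
  - exact: can_inj tFK.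
  - by [].
  - by [].
  - split.
    + by move=> f; rewrite allin.
    + by move=> f'; rewrite /= -(i6 H) tV_p tF_spec (i6 Hq).
    + by move=> f; rewrite allin.
    + by move=> f; rewrite allin.
    + by move=> f'; rewrite /= (iaY H) eqxx.
by exists uV; [exact: tVK | exact: uVK].
Qed.

Lemma tau_eq : morph_eq q (mcomp tau p).
Proof.
split.
- by move=> v; rewrite /= tV_p.
- by move=> f; rewrite /= tF_spec.
- move=> f /=; case: pickP => [g /eqP <- | N] /=; last exact: Hmi.
  by rewrite Hmi; apply/(ifix H); exists g.
Qed.

End Uniq.

Unset Implicit Arguments.

Theorem corollary2p10 (X Y : graph) (p : morph X Y) :
  pure p ->
  [/\ agg (ghost p) = X,
      exists sigma : morph (tquot (ghost p)) Y, is_iso sigma /\ agrees_with_v sigma &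
      forall (Y' : graph) (q : morph X Y'), pure q -> (forall f, mi q f = mi p f) ->
        exists tau : morph Y Y', is_iso tau /\ morph_eq q (mcomp tau p)].
Proof.
move=> /pure_inv H; split.
- exact: agg_ghost.
- by exists (sigma H); split; [exact: sigma_iso | exact: sigma_agrees].
- move=> Y' q /pure_inv Hq Hmi; exists (tau H Hq Hmi); split.
    exact: tau_iso.
  exact: tau_eq.
Qed.
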